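(* Let $G$ be a graph with maximum degree $\Delta\ge3$. Then $\pi_T(G)<15\Delta^2$.
   Context: Graphs are finite and simple. A sequence is nonrepetitive if no block of consecutive terms has the form $r_1\dots r_nr_1\dots r_n$ with $n\ge1$. A (strong) total Thue colouring of $G$ is a colouring of $V(G)\cup E(G)$ such that for every path $v_1,e_1,v_2,\dots,e_{k-1},v_k$ in $G$ the sequence of colours of $v_1,e_1,\dots,v_k$ is nonrepetitive, the sequence of colours of $v_1,\dots,v_k$ is nonrepetitive, and the sequence of colours of $e_1,\dots,e_{k-1}$ is nonrepetitive. $\pi_T(G)$ is the minimum number of colours in a total Thue colouring of $G$. *)

(* Defs.v *)
From mathcomp Require Import all_boot.
Set Implicit Arguments. Unset Strict Implicit. Unset Printing Implicit Defensive.

Definition simple_graph (T : finType) (e : rel T) : Prop :=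
  symmetric e /\ irreflexive e.

Definition degree (T : finType) (e : rel T) (v : T) : nat := #|[set u | e v u]|.
Definition max_degree (T : finType) (e : rel T) : nat := \max_(v : T) degree e v.

Definition nonrepetitive (A : Type) (s : seq A) : Prop :=
  forall a r b : seq A, s = a ++ r ++ r ++ b -> r = [::].

Definition gpath (T : finType) (e : rel T) (x : T) (p : seq T) : bool :=
  path e x p && uniq (x :: p).

Fixpoint total_seq (T C : Type) (cv : T -> C) (ce : T -> T -> C)
    (x : T) (p : seq T) : seq C :=
  cv x :: match p with
          | [::] => [::]
          | y :: p' => ce x y :: total_seq cv ce y p'
          end.

(* A (strong) total Thue colouring with colours in 'I_k: cv colours vertices,
   ce colours edges (ce x y is the colour of the edge xy; it must not depend
   on the orientation of the edge). *)
Definition total_thue_colouring (T : finType) (e : rel T) (k : nat)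
    (cv : T -> 'I_k) (ce : T -> T -> 'I_k) : Prop :=
  (forall x y, e x y -> ce x y = ce y x) /\
  forall (x : T) (p : seq T), gpath e x p ->
    [/\ nonrepetitive (total_seq cv ce x p),
        nonrepetitive (map cv (x :: p)) &
        nonrepetitive (pairmap ce x p)].

Definition total_thue_colourable (T : finType) (e : rel T) (k : nat) : Prop :=
  exists (cv : T -> 'I_k) (ce : T -> T -> 'I_k), total_thue_colouring e cv ce.

(* Main.v *)
Require Import Defs.
From mathcomp Require Import all_boot.
From mathcomp Require Import all_algebra zify ring.
From Stdlib Require Import ClassicalEpsilon Classical.
Set Implicit Arguments. Unset Strict Implicit. Unset Printing Implicit Defensive.


Lemma Tsum N : \sum_(n < N) n.+1 * 2 ^ (N.-1 - n) + N + 2 = 2 ^ N.+1.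
Proof.
elim: N => [|N IH]; first by rewrite big_ord0.
rewrite big_ord_recr /= subnn expn0 muln1.
have -> : \sum_(i < N) i.+1 * 2 ^ (N - i) = 2 * \sum_(i < N) i.+1 * 2 ^ (N.-1 - i).
  rewrite big_distrr /=; apply: eq_bigr => i _.
  have Hi := ltn_ord i.
  have -> : N - i = (N.-1 - i).+1 by lia.
  by rewrite expnS mulnCA.
rewrite expnS -IH; lia.
Qed.

Lemma numeric D M :
  \sum_(n < M.+1) (n.+1).*2 * D ^ ((n.+1).*2.-1) * (2 * D ^ 2) ^ (M - n)
  <= 8 * D * (2 * D ^ 2) ^ M.
Proof.
have E : forall n : 'I_M.+1, (n.+1).*2 * D ^ ((n.+1).*2.-1) * (2 * D ^ 2) ^ (M - n)
   = 2 * D ^ (M.*2.+1) * (n.+1 * 2 ^ (M.+1.-1 - n)).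
  move=> n; have Hn : n <= M by rewrite -ltnS ltn_ord.
  rewrite expnMn -expnM /=.
  have -> : M.*2.+1 = (n.*2.+1) + 2 * (M - n) by lia.
  rewrite expnD; rewrite -!muln2 /=.
  rewrite /=.
  ring.
rewrite (eq_bigr _ (fun n _ => E n)) -big_distrr /=.
have T := Tsum M.+1.
have H : \sum_(i < M.+1) i.+1 * 2 ^ (M - i) <= 2 ^ M.+2 by rewrite -T /=; lia.
rewrite expnMn -expnM.
apply: (leq_trans (leq_mul (leqnn _) H)).
rewrite [2 * M]mul2n !expnS; apply: eq_leq; ring.
Qed.

Definition asb (P : Prop) : bool := if excluded_middle_informative P then true else false.
Lemma asbP (P : Prop) : reflect P (asb P).
Proof. rewrite /asb; case: excluded_middle_informative => H; by constructor. Qed.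

Section Gen.
Variables (X : finType) (R : rel X) (D : nat) (Cl : finType) (c0 : Cl).
Hypothesis Rsym : symmetric R.
Hypothesis Rdeg : forall x, #|[set y | R x y]| <= D.

Definition col := {ffun X -> Cl}.

Definition good_on (S : {set X}) (f : col) : Prop :=
  forall b n, size b = n.*2 -> 0 < n -> uniq b -> sorted R b ->
    {subset b <= S} -> map f (take n b) <> map f (drop n b).

Definition Good (S : {set X}) : {set col} :=
  [set f : col | [forall x, (x \notin S) ==> (f x == c0)] && asb (good_on S f)].

Lemma good_on_mono (S1 S2 : {set X}) (f : col) : S1 \subset S2 -> good_on S2 f -> good_on S1 f.
Proof.
move=> sub H b n Hs Hn Hu Hr Hb; apply: H => // x /Hb; exact: (subsetP sub).
Qed.

Lemma good_on_ext (S : {set X}) (f g : col) : {in S, f =1 g} -> good_on S f -> good_on S g.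
Proof.
move=> E H b n Hs Hn Hu Hr Hb.
have Ht : map g (take n b) = map f (take n b).
  by apply/eq_in_map => x /mem_take /Hb /E ->.
have Hd : map g (drop n b) = map f (drop n b).
  by apply/eq_in_map => x /mem_drop /Hb /E ->.
rewrite Ht Hd; exact: H.
Qed.

Lemma inGood (S : {set X}) (f : col) : (f \in Good S) <-> ((forall x, x \notin S -> f x = c0) /\ good_on S f).
Proof.
rewrite inE; split.
  by case/andP => /forallP H /asbP G; split => // x xS; apply/eqP; move: (H x); rewrite xS.
case=> H G; apply/andP; split; last exact/asbP.
by apply/forallP => x; apply/implyP => /H ->.
Qed.


Fixpoint walks (x : X) (m : nat) : seq (seq X) :=
  if m is m'.+1 then
    flatten [seq [seq x :: w | w <- walks y m'] | y <- enum [set y | R x y]]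
  else [:: [:: x]].

Lemma sumn_map_le (A : eqType) (g : A -> nat) (s : seq A) M :
  (forall y, y \in s -> g y <= M) -> sumn (map g s) <= size s * M.
Proof.
elim: s => //= a s IH H.
rewrite mulSn leq_add ?H ?mem_head //; apply: IH => y ys; apply: H.
by rewrite inE ys orbT.
Qed.

Lemma size_walks x m : size (walks x m) <= D ^ m.
Proof.
elim: m x => [|m IH] x //=.
rewrite size_flatten /shape -map_comp.
apply: (leq_trans (sumn_map_le (M := D ^ m) _)).
  by move=> y _ /=; rewrite size_map IH.
by rewrite expnS leq_mul2r -cardE Rdeg orbT.
Qed.

Lemma walks_complete x w : path R x w -> x :: w \in walks x (size w).
Proof.
elim: w x => [|y w IH] x /=; first by rewrite inE.
case/andP=> Rxy Hp; apply/flatten_mapP; exists y.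
  by rewrite mem_enum inE.
by apply: map_f; apply: IH.
Qed.

Definition blocks (v : X) (m : nat) : seq (seq X) :=
  flatten [seq [seq rev bw ++ behead fw | bw <- walks v j, fw <- walks v (m.*2.-1 - j)]
          | j <- iota 0 m.*2].

Lemma size_blocks v m : size (blocks v m) <= m.*2 * D ^ (m.*2.-1).
Proof.
rewrite size_flatten /shape -map_comp.
rewrite -[in X in _ <= X * _](size_iota 0 m.*2).
apply: sumn_map_le => j; rewrite mem_iota add0n => Hj /=.
rewrite size_allpairs.
apply: (leq_trans (leq_mul (size_walks v j) (size_walks v _))).
by rewrite -expnD subnKC // -ltnS prednK // (leq_ltn_trans _ Hj).
Qed.

Lemma blocks_complete v m b : size b = m.*2 -> sorted R b -> v \in b ->
  b \in blocks v m.
Proof.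
move=> Hs Hr Hv.
set j := index v b.
have Hj : j < size b by rewrite index_mem.
have Eb : b = take j b ++ v :: drop j.+1 b.
  by have := drop_nth v Hj; rewrite nth_index // => <-; rewrite cat_take_drop.
set p := take j b; set q := drop j.+1 b.
move: Hr; rewrite Eb sorted_cat_cons => /andP[Hp Hq].
apply/flatten_mapP; exists j; first by rewrite mem_iota add0n -Hs.
have -> : p ++ v :: q = rev (v :: rev p) ++ behead (v :: q).
  by rewrite rev_cons revK cat_rcons.
apply: allpairs_f.
  have : path R v (rev p).
    have : sorted R (rev (rcons p v)).
      rewrite rev_sorted; apply: sub_sorted Hp => a c; by rewrite Rsym.
    by rewrite rev_rcons.
  move/walks_complete; rewrite size_rev /p size_take Hj //.
move/walks_complete: Hq; rewrite /q size_drop Hs.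
have -> : m.*2 - j.+1 = m.*2.-1 - j by rewrite subnS -subn1 -subnDA addnC subnDA subn1.
by [].
Qed.

Lemma card_bigcup_le (I : Type) (r : seq I) (P : pred I) (F : I -> {set col}) :
  #|\bigcup_(i <- r | P i) F i| <= \sum_(i <- r | P i) #|F i|.
Proof.
elim: r => [|i r IH]; first by rewrite !big_nil cards0.
rewrite !big_cons; case: (P i) => //.
by rewrite cardsU (leq_trans (leq_subr _ _)) // leq_add2l.
Qed.

Lemma sum_seq_le (I : eqType) (r : seq I) (F : I -> nat) c :
  (forall i, i \in r -> F i <= c) -> \sum_(i <- r) F i <= size r * c.
Proof.
elim: r => [|i r IH] H; first by rewrite big_nil.
rewrite big_cons mulSn leq_add ?H ?mem_head // IH // => j jr; apply: H.
by rewrite inE jr orbT.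
Qed.

Definition restr (S : {set X}) (f : col) : col := [ffun x => if x \in S then f x else c0].
Definition upd (f : col) v c : col := [ffun x => if x == v then c else f x].
Definition Ext (S : {set X}) v :=
  [set f : col | [forall x, (x \notin v |: S) ==> (f x == c0)] && asb (good_on S f)].

Lemma inExt (S : {set X}) v (f : col) :
  (f \in Ext S v) <-> ((forall x, x \notin v |: S -> f x = c0) /\ good_on S f).
Proof.
rewrite inE; split.
  by case/andP => /forallP H /asbP G; split => // x xS; apply/eqP; move: (H x); rewrite xS.
case=> H G; apply/andP; split; last exact/asbP.
by apply/forallP => x; apply/implyP => /H ->.
Qed.

Lemma restr_Good (S T0 : {set X}) f : T0 \subset S -> good_on S f -> restr T0 f \in Good T0.
Proof.
move=> sub G; apply/inGood; split.
  by move=> x xT; rewrite ffunE (negbTE xT).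
apply: (good_on_ext (f := f)); last exact: good_on_mono G.
by move=> x xT; rewrite ffunE xT.
Qed.

Lemma card_Ext (S : {set X}) v : v \notin S -> #|Ext S v| = #|Good S| * #|Cl|.
Proof.
move=> vS.
have -> : Ext S v = (fun p : col * Cl => upd p.1 v p.2) @: setX (Good S) [set: Cl].
  apply/setP => f; apply/idP/imsetP.
    case/inExt => H G; exists (restr S f, f v).
      by rewrite inE /= (restr_Good (S := S)) // in_setT andbT.
    apply/ffunP => x; rewrite /upd /restr /= !ffunE.
    case: eqP => [->//|/eqP xv]; case: ifP => // xS.
    by rewrite H // !inE negb_or xv xS.
  case=> [[g c]]; rewrite inE /= in_setT andbT => /inGood [Hg Gg] ->.
  apply/inExt; split.
    by move=> x; rewrite !inE negb_or ffunE => /andP[/negbTE -> /Hg].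
  apply: (good_on_ext (f := g)) Gg => x xS; rewrite ffunE.
  by case: eqP => // xv; move: vS; rewrite -xv xS.
rewrite card_in_imset ?cardsX ?cardsT //.
move=> [g c] [g' c']; rewrite !in_setX /= => /andP[/inGood[Hg _] _] /andP[/inGood[Hg' _] _] E.
have Ec : c = c' by move/ffunP: E => /(_ v); rewrite !ffunE eqxx.
congr (_, _) => //; apply/ffunP => x; move/ffunP: E => /(_ x); rewrite !ffunE.
by case: eqP => // ->; rewrite Hg // Hg'.
Qed.

Lemma Good_sub_Ext (S : {set X}) v : Good (v |: S) \subset Ext S v.
Proof.
apply/subsetP => f /inGood[H G]; apply/inExt; split => //.
by apply: good_on_mono G; apply: subsetUr.
Qed.

Definition hv v (b : seq X) := let h := (size b)./2 in
  if v \in take h b then take h b else drop h b.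
Definition ho v (b : seq X) := let h := (size b)./2 in
  if v \in take h b then drop h b else take h b.
Definition mirror v b x := nth v (ho v b) (index x (hv v b)).
Definition Zs v b : {set X} := [set x | x \in hv v b].
Definition recon v b (g : col) : col :=
  [ffun x => if x \in hv v b then g (mirror v b x) else g x].
Definition Im (S : {set X}) v b := [set recon v b g | g in Good (S :\: Zs v b)].

Lemma halves v b n (f : col) : size b = n.*2 -> uniq b -> v \in b ->
  [/\ v \in hv v b, size (hv v b) = n, size (ho v b) = n,
      uniq (hv v b ++ ho v b) & [/\ {subset ho v b <= b}, {subset hv v b <= b} &
      (map f (take n b) = map f (drop n b) -> map f (hv v b) = map f (ho v b))]].
Proof.
move=> Hs Hu Hv.
have Hh : (size b)./2 = n by rewrite Hs doubleK.
have Hn : n <= size b by rewrite Hs -addnn leq_addr.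
have St : size (take n b) = n by rewrite size_take_min; apply/minn_idPl.
have Sd : size (drop n b) = n by rewrite size_drop Hs -addnn addnK.
rewrite /hv /ho Hh; case: ifP => Ht.
  split => //; first by rewrite cat_take_drop.
  by split => // x; [move/mem_drop | move/mem_take].
split => //.
- by move: Hv; rewrite -[in X in X -> _](cat_take_drop n b) mem_cat Ht.
- by rewrite uniq_catC cat_take_drop.
- by split => // x; [move/mem_take | move/mem_drop].
Qed.

Lemma bad_in_Im (S : {set X}) v (f : col) b n :
  v \notin S -> f \in Ext S v -> size b = n.*2 -> uniq b ->
  {subset b <= v |: S} -> v \in b ->
  map f (take n b) = map f (drop n b) -> f \in Im S v b.
Proof.
move=> vS /inExt[Hf Gf] Hs Hu Hb Hv Hm.
have [Hvh Sh So Uho [Sub _ Hmap']] := halves f Hs Hu Hv.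
have Hmap := Hmap' Hm.
apply/imsetP; exists (restr (S :\: Zs v b) f).
  by apply: (restr_Good (S := S)) => //; apply: subsetDl.
have disj : forall x, x \in ho v b -> x \notin hv v b.
  move=> x xo; apply/negP => xh; move: Uho; rewrite cat_uniq => /and3P[_ /hasP H _].
  by apply: H; exists x.
apply/ffunP => x; rewrite !ffunE.
case: ifP => xh.
  set i := index x (hv v b).
  have Hi : i < n by rewrite -Sh index_mem.
  have Hmo : mirror v b x \in ho v b by rewrite /mirror mem_nth // So.
  have HmS : mirror v b x \in S :\: Zs v b.
    rewrite !inE (negbTE (disj _ Hmo)) /=.
    have := Hb _ (Sub _ Hmo); rewrite !inE => /orP[/eqP E|//].
    by move: (disj _ Hmo); rewrite E Hvh.
  rewrite HmS.
  rewrite -{1}(nth_index v xh) -/i -(nth_map v (f v)) ?Sh // Hmap.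
  by rewrite (nth_map v) ?So.
have xZ : x \notin Zs v b by rewrite inE xh.
rewrite inE xZ /=; case: ifP => // xS.
apply: Hf; rewrite !inE xS orbF; apply/eqP => E.
by move: xh; rewrite E Hvh.
Qed.

Lemma mem_bigcup_seq (I : eqType) (r : seq I) (F : I -> {set col}) i f :
  i \in r -> f \in F i -> f \in \bigcup_(j <- r) F j.
Proof.
elim: r => [|j r IH] //; rewrite inE big_cons inE => /orP[/eqP <- -> //|ir fF].
by rewrite IH ?orbT.
Qed.

Hypothesis HD : 0 < D.
Hypothesis Hk : 2 * D ^ 2 + 8 * D <= #|Cl|.
Local Notation beta := (2 * D ^ 2).

Lemma beta_gt0 : 0 < beta.
Proof. by rewrite muln_gt0 expn_gt0 HD. Qed.

Section Step.
Variable S : {set X}.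
Hypothesis IH : forall (S' : {set X}) v', #|S'| < #|S| -> v' \notin S' ->
  beta * #|Good S'| <= #|Good (v' |: S')|.

Lemma multi : forall m (Y : {set X}), #|Y| = m -> Y \subset S ->
  beta ^ m * #|Good (S :\: Y)| <= #|Good S|.
Proof.
elim=> [|m IHm] Y HY sub.
  by move/cards0_eq: HY => ->; rewrite setD0 expn0 mul1n.
have [y yY] : exists y, y \in Y by apply/card_gt0P; rewrite HY.
have HY' : #|Y :\ y| = m by move: HY; rewrite (cardsD1 y) yY add1n => [[]].
have sub' : Y :\ y \subset S by apply: subset_trans sub; apply: subsetDl.
have yS : y \in S := subsetP sub y yY.
have E : S :\: (Y :\ y) = y |: (S :\: Y).
  apply/setP => x; rewrite !inE; case: (x =P y) => [->|/eqP xy]; by rewrite ?eqxx ?yS ?xy.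
have yn : y \notin S :\: Y by rewrite inE yY.
have lt : #|S :\: Y| < #|S|.
  have := subset_leq_card sub; rewrite cardsD (setIidPr sub) HY; lia.
rewrite expnSr -mulnA.
apply: leq_trans (IHm _ HY' sub').
by rewrite E leq_mul2l IH ?orbT.
Qed.

Lemma hv_Zs v b n : size b = n.*2 -> uniq b -> v \in b -> {subset b <= v |: S} ->
  n.-1 <= #|S :&: Zs v b| /\ S :\: Zs v b = S :\: (S :&: Zs v b).
Proof.
move=> Hs Hu Hv Hb.
have [Hvh Sh _ Uho [_ Subh _]] := halves [ffun=> c0] Hs Hu Hv.
split; last first.
  by apply/setP => x; rewrite /Zs !inE; case: (x \in S); case: (x \in hv v b).
have cZ : #|Zs v b| = n.
  rewrite /Zs cardsE -Sh; apply/card_uniqP.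
  by move: Uho; rewrite cat_uniq => /andP[].
have vZ : v \in Zs v b by rewrite inE.
have : Zs v b :\ v \subset S :&: Zs v b.
  apply/subsetP => x; rewrite !inE => /andP[xv xh]; rewrite xh andbT.
  by have := Hb _ (Subh _ xh); rewrite !inE (negbTE xv).
move/subset_leq_card; move: (cardsD1 v (Zs v b)); rewrite vZ cZ; lia.
Qed.

Lemma step v : v \notin S -> beta * #|Good S| <= #|Good (v |: S)|.
Proof.
move=> vS.
set G := #|Good S|.
have [M HM] : exists M, #|X| = M.+1.
  by exists #|X|.-1; rewrite prednK //; apply/card_gt0P; exists v.
set okb := fun n (b : seq X) =>
  [&& uniq b, v \in b, all (mem (v |: S)) b & size b == n.+1.*2].
set Lf := fun n : nat => [seq b <- blocks v n.+1 | okb n b].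
set Bad := Ext S v :\: Good (v |: S).
have HBsub : Bad \subset \bigcup_(n < M.+1) \bigcup_(b <- Lf n) Im S v b.
  apply/subsetP => f; rewrite inE => /andP[fG fE].
  have fE' := fE; move/inExt: fE' => [Hf Gf].
  have nG : ~ good_on (v |: S) f.
    move=> G'; move/negP: fG; apply; apply/inGood; split => //.
  have [b [n [Hs [Hn [Hu [Hr [Hb Hm]]]]]]] : exists b n, size b = n.*2 /\ 0 < n /\
      uniq b /\ sorted R b /\ {subset b <= v |: S} /\
      map f (take n b) = map f (drop n b).
    apply: NNPP => H; apply: nG => b n Hs Hn Hu Hr Hb Hm; apply: H.
    by exists b, n.
  have Hv : v \in b.
    apply/negP => vb; apply: (Gf b n) Hm => // x xb.
    have := Hb x xb; rewrite !inE => /orP[/eqP E|//].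
    by move: vb; rewrite -E xb.
  case: n Hs Hn Hm => // n Hs _ Hm.
  have nN : n < M.+1.
    have := max_card (mem b); move/card_uniqP: Hu => ->; rewrite Hs HM; lia.
  apply/bigcupP; exists (Ordinal nN) => //=.
  apply: (mem_bigcup_seq (i := b)); last exact: bad_in_Im Hm.
  rewrite /Lf mem_filter /okb Hu Hv Hs eqxx /= andbT.
  apply/andP; split; first by apply/allP.
  by apply: blocks_complete.
have cardBad : #|Bad| <= \sum_(n < M.+1) \sum_(b <- Lf n) #|Good (S :\: Zs v b)|.
  apply: leq_trans (subset_leq_card HBsub) _.
  apply: leq_trans (card_bigcup_le _ _ _) _.
  apply: leq_sum => n _.
  apply: leq_trans (card_bigcup_le _ _ _) _.
  by apply: leq_sum => b _; apply: leq_imset_card.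
have termb : forall n : 'I_M.+1, forall b, b \in Lf n ->
    beta ^ M * #|Good (S :\: Zs v b)| <= beta ^ (M - n) * G.
  move=> n b; rewrite mem_filter => /andP[/and4P[Hu Hv /allP Hb /eqP Hs] _].
  have [H1 H2] := hv_Zs Hs Hu Hv Hb.
  have Hn : n <= M by rewrite -ltnS ltn_ord.
  have -> : beta ^ M = beta ^ (M - n) * beta ^ n by rewrite -expnD subnK.
  rewrite -mulnA leq_mul2l; apply/orP; right.
  rewrite H2; apply: leq_trans (multi (Y := S :&: Zs v b) (erefl _) (subsetIl _ _)).
  by apply: leq_mul => //; apply: leq_pexp2l beta_gt0 _.
have total : beta ^ M * #|Bad| <= beta ^ M * (8 * D * G).
  apply: leq_trans (leq_mul (leqnn _) cardBad) _.
  rewrite big_distrr /=.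
  apply: (@leq_trans (\sum_(n < M.+1) (n.+1).*2 * D ^ ((n.+1).*2.-1) * beta ^ (M - n) * G)).
    apply: leq_sum => n _; rewrite big_distrr /=.
    apply: leq_trans (sum_seq_le (c := beta ^ (M - n) * G) _) _.
      by move=> b bL; apply: termb.
    rewrite -[X in _ <= X]mulnA; apply: leq_mul => //.
    rewrite size_filter; apply: leq_trans (count_size _ _) _.
    exact: size_blocks.
  rewrite -big_distrl /=.
  apply: leq_trans (leq_mul (numeric D M) (leqnn G)) _.
  by rewrite mulnCA mulnA.
have hB : #|Bad| <= 8 * D * G.
  by move: total; rewrite leq_pmul2l // expn_gt0 beta_gt0.
have cE := card_Ext vS.
have sub := Good_sub_Ext S v.
have E : #|Bad| = #|Ext S v| - #|Good (v |: S)| by rewrite /Bad cardsD (setIidPr sub).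
have := subset_leq_card sub.
have := leq_mul (leqnn G) Hk.
rewrite mulnDr cE -/G in E * => h1 h2.
rewrite [beta * G]mulnC; rewrite [8 * D * G]mulnC in hB.
lia.
Qed.

End Step.

Lemma main_step : forall (S : {set X}) v, v \notin S -> beta * #|Good S| <= #|Good (v |: S)|.
Proof.
suff H : forall m (S : {set X}), #|S| <= m -> forall v, v \notin S ->
    beta * #|Good S| <= #|Good (v |: S)| by move=> S; apply: (H #|S|).
elim=> [|m IHm] S HS v vS; apply: step vS => S' v' lt v'S'.
  by move: lt; rewrite ltnNge (leq_trans HS) ?leq0n.
by apply: IHm => //; rewrite -ltnS (leq_trans lt).
Qed.

Lemma exists_good : exists f : col, good_on setT f.
Proof.
have := multi (S := setT) (fun S' v' _ => main_step (S := S') (v := v')) (erefl _) (subxx _).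
rewrite setDv => H.
have g0 : [ffun=> c0] \in Good set0.
  apply/inGood; split; first by move=> x _; rewrite ffunE.
  move=> b n Hs Hn _ _ Hb; case: b Hs Hb => [|x b] Hs Hb; first by move: Hs Hn; case: n.
  by have := Hb x (mem_head _ _); rewrite inE.
have : 0 < #|Good setT|.
  apply: leq_trans H; rewrite muln_gt0 expn_gt0 beta_gt0 /=.
  by apply/card_gt0P; exists [ffun=> c0].
case/card_gt0P => f /inGood[_ Gf]; by exists f.
Qed.

End Gen.


Section Graph.
Variables (T : finType) (e : rel T).
Hypotheses (esym : symmetric e) (eirr : irreflexive e).
Local Notation Dl := (max_degree e).

Definition rk (x : T) : nat := enum_rank x.
Definition opair x y : T * T := if rk x <= rk y then (x, y) else (y, x).
Definition canon (q : T * T) := e q.1 q.2 && (rk q.1 < rk q.2).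
Definition hasv x (q : T * T) := (x == q.1) || (x == q.2).
Definition XT := (T + (T * T))%type.
Definition RT (a b : XT) : bool :=
  match a, b with
  | inl x, inl y => e x y
  | inl x, inr q => canon q && hasv x q
  | inr q, inl x => canon q && hasv x q
  | inr p, inr q => [&& canon p, canon q, p != q & (hasv p.1 q || hasv p.2 q)]
  end.

Lemma rk_inj x y : rk x = rk y -> x = y.
Proof. by move=> H; apply: enum_rank_inj; apply: val_inj. Qed.

Lemma opairC x y : opair x y = opair y x.
Proof.
rewrite /opair; case: (leqP (rk x) (rk y)) => h1; case: (leqP (rk y) (rk x)) => h2 //.
  have E : rk x = rk y by lia.
  by rewrite (rk_inj E).
lia.
Qed.

Lemma hasv_opair x a b : hasv x (opair a b) = (x == a) || (x == b).
Proof. by rewrite /hasv /opair; case: ifP => //= _; rewrite orbC. Qed.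

Lemma canon_opair x y : e x y -> canon (opair x y).
Proof.
move=> exy; rewrite /opair; case: leqP => h; rewrite /canon /=.
  rewrite exy /= ltn_neqAle h andbT; apply/eqP => E.
  by move: exy; rewrite (rk_inj E) eirr.
by rewrite esym exy.
Qed.

Lemma RTsym : symmetric RT.
Proof.
case=> [x|p] [y|q] /=; [exact: esym | by [] | by [] |].
rewrite [q == p]eq_sym andbCA; congr (_ && (_ && (_ && _))).
rewrite /hasv; case: p q => [p1 p2] [q1 q2] /=.
by rewrite ![q1 == _]eq_sym ![q2 == _]eq_sym; case: (p1 == q1); case: (p1 == q2);
  case: (p2 == q1); case: (p2 == q2).
Qed.

Lemma deg_le x : #|[set y | e x y]| <= Dl.
Proof. exact: (leq_bigmax (F := degree e)). Qed.

Definition oth x (q : T * T) := if x == q.1 then q.2 else q.1.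

Lemma opair_oth x q : canon q -> hasv x q -> opair x (oth x q) = q /\ e x (oth x q).
Proof.
case: q => a b; rewrite /canon /hasv /oth /opair /= => /andP[eab lab].
case: (x =P a) => [->|xa] /=; first by rewrite (ltnW lab) eab.
by move/eqP=> ->; rewrite leqNgt lab esym.
Qed.

Lemma cnt x (P : pred (T * T)) :
  #|[set q | canon q && hasv x q && P q]| <= #|[set y | e x y && P (opair x y)]|.
Proof.
rewrite -(card_in_imset (f := oth x)); last first.
  move=> q q'; rewrite !inE => /andP[/andP[c1 h1] _] /andP[/andP[c2 h2] _] E.
  by rewrite -(opair_oth c1 h1).1 -(opair_oth c2 h2).1 E.
apply: subset_leq_card; apply/subsetP => y /imsetP[q]; rewrite inE.
case/andP=> [/andP[c h] Pq] ->; have [E1 E2] := opair_oth c h.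
by rewrite inE E2 E1.
Qed.

Lemma card_sub_sum (A : {set XT}) (B : {set T}) (C : {set T * T}) :
  A \subset (inl @: B) :|: (inr @: C) -> #|A| <= #|B| + #|C|.
Proof.
move/subset_leq_card => H; apply: leq_trans H _.
rewrite cardsU (leq_trans (leq_subr _ _)) //.
by apply: leq_add; apply: leq_imset_card.
Qed.

Lemma RT_deg (w : XT) : #|[set z | RT w z]| <= 2 * Dl.
Proof.
case: w => [x|p].
  apply: leq_trans (card_sub_sum (B := [set y | e x y])
      (C := [set q | canon q && hasv x q && predT q]) _) _.
    apply/subsetP; case=> [y|q]; rewrite inE /= => H; apply/setUP.
      by left; apply/imsetP; exists y; rewrite ?inE.
    by right; apply/imsetP; exists q; rewrite ?inE /= ?H.
  have := deg_le x; have := cnt x predT.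
  have -> : [set y | e x y && predT (opair x y)] = [set y | e x y].
    by apply/setP => y; rewrite !inE andbT.
  move=> h1 h2; apply: leq_trans (leq_add (leqnn _) h1) _; lia.
case Cp: (canon p); last first.
  have -> : [set z | RT (inr p) z] = set0.
    by apply/setP; case=> [y|q]; rewrite !inE /= Cp.
  by rewrite cards0.
apply: leq_trans (card_sub_sum (B := [set y | hasv y p])
   (C := [set q | canon q && hasv p.1 q && (q != p)] :|:
         [set q | canon q && hasv p.2 q && (q != p)]) _) _.
  apply/subsetP; case=> [y|q]; rewrite inE /= => H; apply/setUP.
    by left; apply/imsetP; exists y; rewrite ?inE; case/andP: H.
  right; apply/imsetP; exists q => //.
  by case/and4P: H => _ cq pq /orP[h|h]; rewrite !inE cq h eq_sym pq /= ?orbT.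
have HB : #|[set y | hasv y p]| <= 2.
  apply: leq_trans (_ : #|[set p.1; p.2]| <= 2); last by rewrite cards2; case: (_ != _).
  by apply: subset_leq_card; apply/subsetP => y; rewrite !inE.
case: p Cp HB => [a b] Cp HB.
have Eab : opair a b = (a, b) by rewrite /opair; case/andP: Cp => _ /ltnW ->.
have eab : e a b by case/andP: Cp.
have C1 : #|[set q | canon q && hasv (a, b).1 q && (q != (a, b))]| < #|[set y | e a y]|.
  apply: leq_ltn_trans (cnt a (fun q => q != (a, b))) _.
  rewrite (cardsD1 b [set y | e a y]) inE eab add1n ltnS.
  by apply: subset_leq_card; apply/subsetP => y; rewrite !inE => /andP[-> ne];
    rewrite andbT; apply: contra ne => /eqP ->; rewrite Eab.
have C2 : #|[set q | canon q && hasv (a, b).2 q && (q != (a, b))]| < #|[set y | e b y]|.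
  apply: leq_ltn_trans (cnt b (fun q => q != (a, b))) _.
  rewrite (cardsD1 a [set y | e b y]) inE esym eab add1n ltnS.
  by apply: subset_leq_card; apply/subsetP => y; rewrite !inE => /andP[-> ne];
    rewrite andbT; apply: contra ne => /eqP ->; rewrite opairC Eab.
have := deg_le a; have := deg_le b.
have := cardsU [set q | canon q && hasv (a, b).1 q && (q != (a, b))]
   [set q | canon q && hasv (a, b).2 q && (q != (a, b))].
move=> h0 h1 h2.
set A1 := #|[set q | canon q && hasv (a, b).1 q && (q != (a, b))]| in C1 h0 *.
set A2 := #|[set q | canon q && hasv (a, b).2 q && (q != (a, b))]| in C2 h0 *.
set A4 := #|_ :|: _| in h0 *.
set A0 := #|[set y | hasv y (a, b)]| in HB *.
set D1 := #|[set y | e a y]| in C1 h2.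
set D2 := #|[set y | e b y]| in C2 h1.
lia.
Qed.


Lemma all_cons (A : Type) (a : pred A) x s : all a (x :: s) = a x && all a s.
Proof. by []. Qed.

Fixpoint tot (x : T) (p : seq T) : seq XT :=
  inl x :: (if p is y :: p' then inr (opair x y) :: tot y p' else [::]).
Definition ed (a b : T) : XT := inr (opair a b).
Definition inv (s : seq T) (w : XT) :=
  match w with inl a => a \in s | inr q => (q.1 \in s) && (q.2 \in s) end.

Lemma opair_in s a b : a \in s -> b \in s -> inv s (inr (opair a b)).
Proof. by move=> aS bS; rewrite /inv /opair; case: ifP => _ /=; rewrite aS bS. Qed.

Lemma inv_opair s x y : inv s (inr (opair x y)) -> x \in s.
Proof.
have := hasv_opair x x y; rewrite eqxx /= /hasv /inv.
by case/orP => /eqP <- /andP[].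
Qed.

Lemma inv_sub s s' w : {subset s <= s'} -> inv s w -> inv s' w.
Proof. by move=> sub; case: w => [a|q] /=; [apply: sub | case/andP => /sub -> /sub ->]. Qed.

Lemma tot_inv x p : all (inv (x :: p)) (tot x p).
Proof.
elim: p x => [|y p IH] x; first by rewrite /= mem_head.
have -> : tot x (y :: p) = inl x :: inr (opair x y) :: tot y p by [].
rewrite !all_cons opair_in ?mem_head ?inE ?eqxx ?orbT //=.
rewrite mem_head /=; apply: (sub_all _ (IH y)) => w; apply: inv_sub => z zy; by rewrite in_cons zy orbT.
Qed.

Lemma pm_inv x p : all (inv (x :: p)) (pairmap ed x p).
Proof.
elim: p x => [|y p IH] x //.
have -> : pairmap ed x (y :: p) = inr (opair x y) :: pairmap ed y p by [].
rewrite !all_cons opair_in ?mem_head ?inE ?eqxx ?orbT //=.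
apply: (sub_all _ (IH y)) => w; apply: inv_sub => z zy; by rewrite in_cons zy orbT.
Qed.

Lemma tot_ok x p : path e x p -> uniq (x :: p) -> uniq (tot x p) && sorted RT (tot x p).
Proof.
elim: p x => [|y p IH] x //= /andP[exy Hp] /andP[xn Hu].
have /andP[U S] := IH y Hp Hu.
have Ti := tot_inv y p.
apply/andP; split.
  rewrite /= U andbT inE negb_or /=; apply/andP; split.
    by apply/negP => /(allP Ti) /= ; apply/negP.
  by apply/negP => /(allP Ti) /inv_opair; apply/negP.
move: S; have -> : tot y p = inl y :: behead (tot y p) by case: (p) {IH Hp Hu U Ti}.
by rewrite /= !canon_opair // !hasv_opair !eqxx /= !orbT /= => ->.
Qed.

Lemma share y o1 o2 : hasv y o1 -> hasv y o2 -> hasv o1.1 o2 || hasv o1.2 o2.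
Proof. by rewrite /hasv; case/orP => /eqP <- ->; rewrite ?orbT. Qed.

Lemma pm_ok x p : path e x p -> uniq (x :: p) ->
  uniq (pairmap ed x p) && sorted RT (pairmap ed x p).
Proof.
elim: p x => [|y p IH] x //= /andP[exy Hp] /andP[xn Hu].
have /andP[U S] := IH y Hp Hu.
apply/andP; split.
  rewrite U andbT; apply/negP => /(allP (pm_inv y p)) /inv_opair; apply/negP => //.
case: p xn Hp Hu IH U S => [|z p] //= xn /andP[eyz Hp] Hu IH U S.
rewrite S andbT /ed /= canon_opair // canon_opair //=.
rewrite (@share y) ?hasv_opair ?eqxx ?orbT // andbT.
apply/eqP => E; have := hasv_opair x y z; rewrite -E hasv_opair eqxx /=.
move: xn Hu; rewrite !inE negb_or => /andP[/negbTE -> /norP[/negbTE -> _]] _.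
by [].
Qed.

Lemma tot_eq (Cl : Type) (f : XT -> Cl) x p :
  total_seq (fun v => f (inl v)) (fun a b => f (inr (opair a b))) x p = map f (tot x p).
Proof. by elim: p x => [|y p IH] x //=; rewrite IH. Qed.

Lemma pm_eq (Cl : Type) (f : XT -> Cl) x p :
  pairmap (fun a b => f (inr (opair a b))) x p = map f (pairmap ed x p).
Proof. by elim: p x => [|y p IH] x //=; rewrite IH. Qed.

End Graph.

Lemma nonrep_good (X : finType) (R : rel X) (Cl : finType) (f : col X Cl) (s : seq X) :
  good_on R setT f -> uniq s -> sorted R s -> nonrepetitive (map f s).
Proof.
move=> G Hu Hs a r b E; case: r E => [//|c r] E; exfalso.
set n := size (c :: r).
set blk := take (n + n) (drop (size a) s).
have Hm : map f blk = (c :: r) ++ (c :: r).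
  rewrite /blk map_take map_drop E drop_size_cat // catA take_size_cat //.
  by rewrite size_cat.
have Hsz : size blk = n.*2 by rewrite -(size_map f) Hm size_cat -addnn.
apply: (G blk n Hsz) => //.
- exact: take_uniq (drop_uniq _ Hu).
- exact: take_sorted (drop_sorted _ Hs).
- by move=> x; rewrite in_setT.
- by rewrite map_take map_drop Hm take_size_cat // drop_size_cat.
Qed.

Theorem theorem18 (T : finType) (e : rel T) :
  simple_graph e -> 3 <= max_degree e ->
  exists k, k < 15 * (max_degree e) ^ 2 /\ total_thue_colourable e k.
Proof.
move=> [esym eirr] H3.
set Dl := max_degree e in H3 *.
set K := 2 * (2 * Dl) ^ 2 + 8 * (2 * Dl).
have K0 : 0 < K by rewrite /K -!mulnn; nia.
have HD : 0 < 2 * Dl by lia.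
have Hk : 2 * (2 * Dl) ^ 2 + 8 * (2 * Dl) <= #|'I_K| by rewrite card_ord.
have [f Gf] := exists_good (Ordinal K0) (RTsym esym) (RT_deg esym) HD Hk.
exists K; split.
  by rewrite /K -!mulnn; nia.
exists (fun x => f (inl x)), (fun x y => f (inr (opair x y))); split.
  by move=> x y _; rewrite opairC.
move=> x p /andP[Hp Hu]; split.
- rewrite tot_eq; have /andP[U S] := tot_ok esym eirr Hp Hu.
  exact: nonrep_good Gf U S.
- rewrite (_ : map _ _ = map f (map inl (x :: p))); last by rewrite -map_comp.
  apply: nonrep_good Gf _ _.
    by rewrite map_inj_uniq //; move=> a b [].
  by rewrite /= path_map.
- rewrite pm_eq; have /andP[U S] := pm_ok esym eirr Hp Hu.
  exact: nonrep_good Gf U S.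
Qed.
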